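(* Let $n\ge 5$ and let $f$ be an RDF of $P(n,2)$ of weight $\gamma_R(P(n,2))$ with $|V_2|$ minimum among all such minimum-weight RDFs. For any index $i$, if $r_f(V'(i,7)) = 0.5$, then either $r_f(V'(i-7,7))\ge 1$ and $r_f(V'(i+7,7))\ge 1.5$, or $r_f(V'(i-7,7))\ge 1.5$ and $r_f(V'(i+7,7))\ge 1$.
   Context: For integers $n \ge 3$ and $1 \le k < n/2$, the generalized Petersen graph $P(n,k)$ has vertex set $\{v_i, u_i : 0 \le i \le n-1\}$ and edge set $\{v_iv_{i+1},\ v_iu_i,\ u_iu_{i+k} : 0 \le i \le n-1\}$, with subscripts taken modulo $n$. A Roman domination function (RDF) of a graph $G$ is a function $f: V(G)\to\{0,1,2\}$ such that every vertex $u$ with $f(u)=0$ is adjacent to at least one vertex $v$ with $f(v)=2$. Its weight is $\sum_{u\in V(G)} f(u)$; $\gamma_R(G)$ is the minimum weight of an RDF of $G$. For an RDF $f$ write $V_i=\{w: f(w)=i\}$, $i=0,1,2$. Define $g_f(w)=0.5$ if $w\in V_2$, $g_f(w)=1$ if $w\in V_1$, and $g_f(w)=0.5\,|N(w)\cap V_2|$ if $w\in V_0$, where $N(w)$ is the set of neighbors of $w$. Let $r_f(w)=g_f(w)-0.5$ and, for $S\subseteq V(P(n,2))$, $r_f(S)=\sum_{w\in S} r_f(w)$. For an integer $i$ and $t\ge 1$, $V'(i,t)=\{v_j,u_j : i\le j\le i+t-1\}$ (subscripts modulo $n$). *)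

(* Defs.v *)
From HB Require Import structures.
From mathcomp Require Import all_boot all_order all_algebra.
Import Order.TTheory GRing.Theory Num.Theory.

(* Vertices of P(n,k): (false, i) is v_i, (true, i) is u_i, for i : 'I_n. *)
Definition pvert (n : nat) : finType := (bool * 'I_n)%type.

(* Edges v_i v_{i+1}, v_i u_i, u_i u_{i+k} (subscripts mod n). *)
Definition gp_adj (n k : nat) (x y : pvert n) : bool :=
  let: (bx, i) := x in let: (by_, j) := y in
  if bx == by_ then
    let d := if bx then k else 1%N in
    (val j == (val i + d) %% n) || (val i == (val j + d) %% n)
  else val i == val j.

Definition P2adj (n : nat) (x y : pvert n) : bool := gp_adj n 2 x y.

Definition is_RDF (n : nat) (f : pvert n -> nat) : Prop :=
  forall w, f w <= 2 /\ (f w = 0 -> exists w', P2adj n w w' /\ f w' = 2).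

Definition weight (n : nat) (f : pvert n -> nat) : nat := \sum_(w : pvert n) f w.

Definition Vset (n : nat) (f : pvert n -> nat) (a : nat) : {set pvert n} :=
  [set w | f w == a].

Definition is_gammaR_RDF (n : nat) (f : pvert n -> nat) : Prop :=
  is_RDF n f /\ forall g, is_RDF n g -> weight n f <= weight n g.

Definition is_min_RDF_minV2 (n : nat) (f : pvert n -> nat) : Prop :=
  is_gammaR_RDF n f /\
  forall g, is_gammaR_RDF n g -> #|Vset n f 2| <= #|Vset n g 2|.

Local Open Scope ring_scope.

Definition g_f (n : nat) (f : pvert n -> nat) (w : pvert n) : rat :=
  if f w == 2%N then 1 / 2
  else if f w == 1%N then 1
  else (#|[set w' | P2adj n w w' && (w' \in Vset n f 2)]|)%:R / 2.

Definition r_f (n : nat) (f : pvert n -> nat) (w : pvert n) : rat := g_f n f w - 1 / 2.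

Definition r_fS (n : nat) (f : pvert n -> nat) (S : {set pvert n}) : rat :=
  \sum_(w in S) r_f n f w.

(* V'(i,t) = {v_j, u_j : i <= j <= i+t-1}, subscripts mod n, i an integer. *)
Definition Vp (n : nat) (i : int) (t : nat) : {set pvert n} :=
  [set w : pvert n | [exists k : 'I_t,
      ((nat_of_ord w.2)%:Z == i + (nat_of_ord k)%:Z %[mod (n : int)])%Z]].

(* Main.v *)
Require Import Defs.
From HB Require Import structures.
From mathcomp Require Import all_boot all_order all_algebra.
From mathcomp Require Import zify lra.
Import Order.TTheory GRing.Theory Num.Theory.
Set Implicit Arguments. Unset Strict Implicit. Unset Printing Implicit Defensive.

Definition col := (bool * bool)%type.
Definition cands : seq col := [:: (false,false); (true,false); (false,true); (true,true)].
Definition pc (c : col) : nat := c.1 + c.2.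
Definition cost5 (a b c d e : col) : nat :=
  2 * pc c + (~~ [|| c.1, b.1, d.1 | c.2]) + (~~ [|| c.2, c.1, a.2 | e.2]).
Definition rv (b c d : col) : nat :=
  if c.1 then 0 else let k := b.1 + d.1 + c.2 in if k == 0 then 1 else k.-1.
Definition ru (a c e : col) : nat :=
  if c.2 then 0 else let k := a.2 + e.2 + c.1 in if k == 0 then 1 else k.-1.
Definition r5 (a b c d e : col) : nat := rv b c d + ru a c e.
Definition W9 (a0 a1 a2 a3 y a5 a6 a7 a8 : col) : nat :=
  cost5 a0 a1 a2 a3 y + cost5 a1 a2 a3 y a5 + cost5 a2 a3 y a5 a6
  + cost5 a3 y a5 a6 a7 + cost5 y a5 a6 a7 a8.
Definition locx (a0 a1 a2 a3 a4 a5 a6 a7 a8 x : col) : bool :=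
  let w := W9 a0 a1 a2 a3 a4 a5 a6 a7 a8 in
  let w' := W9 a0 a1 a2 a3 x a5 a6 a7 a8 in
  (w < w') || ((w == w') && (pc a4 <= pc x)).
Definition loc9 (a0 a1 a2 a3 a4 a5 a6 a7 a8 : col) : bool :=
  all (locx a0 a1 a2 a3 a4 a5 a6 a7 a8) cands.

Definition d0 : col := (false, false).
Definition headr5 (rp : seq col) : nat :=
  if 5 <= size rp then r5 (nth d0 rp 4) (nth d0 rp 3) (nth d0 rp 2) (nth d0 rp 1) (nth d0 rp 0)
  else 0.
Definition headloc (rp : seq col) : bool :=
  if 9 <= size rp then
    loc9 (nth d0 rp 8) (nth d0 rp 7) (nth d0 rp 6) (nth d0 rp 5) (nth d0 rp 4)
         (nth d0 rp 3) (nth d0 rp 2) (nth d0 rp 1) (nth d0 rp 0)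
  else true.
Definition inrg (lo hi t : nat) : bool := (lo <= t) && (t <= hi).

Fixpoint sdfs (pr : nat -> nat -> bool) (k t : nat) (rp : seq col) (sl sm sr : nat) : bool :=
  match k with
  | 0 => false
  | k'.+1 =>
    all (fun x =>
      let rp' := x :: rp in let t' := t.+1 in
      let r := headr5 rp' in
      let sl' := if inrg 5 11 t' then sl + r else sl in
      let sm' := if inrg 12 18 t' then sm + r else sm in
      let sr' := if inrg 19 25 t' then sr + r else sr in
      if [&& headloc rp', sm' <= 1, (t' == 18) ==> (sm' == 1) & pr sl' sr']
      then sdfs pr k' t' rp' sl' sm' sr' else true) cands
  end.

Lemma dfs_S pr k t rp sl sm sr : sdfs pr k.+1 t rp sl sm sr =
    all (fun x =>
      let rp' := x :: rp in let t' := t.+1 in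
      let r := headr5 rp' in
      let sl' := if inrg 5 11 t' then sl + r else sl in
      let sm' := if inrg 12 18 t' then sm + r else sm in
      let sr' := if inrg 19 25 t' then sr + r else sr in
      if [&& headloc rp', sm' <= 1, (t' == 18) ==> (sm' == 1) & pr sl' sr']
      then sdfs pr k t' rp' sl' sm' sr' else true) cands.
Proof. by []. Qed.

Definition prA (a b : nat) : bool := a <= 1.
Definition prC (a b : nat) : bool := (a <= 2) && (b <= 2).

Lemma dfsA : sdfs prA 25 0 [::] 0 0 0 = true.
Proof. vm_compute. reflexivity. Qed.
Lemma dfsC : sdfs prC 25 0 [::] 0 0 0 = true.
Proof. vm_compute. reflexivity. Qed.

Definition r5b (g : nat -> col) (b : nat) : nat :=
  r5 (g b) (g (b+1)) (g (b+2)) (g (b+3)) (g (b+4)).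
Definition loc9b (g : nat -> col) (b : nat) : bool :=
  loc9 (g b) (g (b+1)) (g (b+2)) (g (b+3)) (g (b+4)) (g (b+5)) (g (b+6)) (g (b+7)) (g (b+8)).
Fixpoint part (g : nat -> col) (a t : nat) : nat :=
  if t is t'.+1 then part g a t' + (if inrg (a+5) (a+11) t then r5b g (t - 5) else 0) else 0.
Definition Wn (g : nat -> col) (a : nat) : nat := \sum_(q < 7) r5b g (a + q).

Lemma mem_cands x : x \in cands.
Proof. by case: x => [[] []]. Qed.

Section Sound.
Variable l : seq col.
Hypothesis Hl : size l = 25.
Let gl := nth d0 l.

Lemma nth_rt t q : t <= size l -> q < t -> nth d0 (rev (take t l)) q = gl (t - q.+1).
Proof.
move=> tl qt; rewrite nth_rev size_takel //.
by rewrite nth_take //; lia.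
Qed.

Lemma headr5_rt m : m + 5 <= size l -> headr5 (rev (take (m+5) l)) = r5b gl m.
Proof.
move=> ml; rewrite /headr5 size_rev size_takel // leq_addl.
rewrite !nth_rt //; try lia.
rewrite /r5b; congr r5; congr gl; lia.
Qed.

Lemma headloc_rt m : m + 9 <= size l -> headloc (rev (take (m+9) l)) = loc9b gl m.
Proof.
move=> ml; rewrite /headloc size_rev size_takel // leq_addl.
rewrite !nth_rt //; try lia.
rewrite /loc9b; congr loc9; congr gl; lia.
Qed.

Lemma headloc_short t : t < 9 -> t <= size l -> headloc (rev (take t l)) = true.
Proof. by move=> t9 tl; rewrite /headloc size_rev size_takel // leqNgt t9. Qed.

Lemma rev_take_S t : t < size l -> rev (take t.+1 l) = gl t :: rev (take t l).
Proof. by move=> tl; rewrite (take_nth d0) // rev_rcons. Qed.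

Lemma part_mono a t t' : t <= t' -> part gl a t <= part gl a t'.
Proof.
apply: (homo_leq (f := part gl a) (r := leq)) => //.
- exact: leq_trans.
- by move=> i /=; apply: leq_addr.
Qed.

Lemma part_const a j : part gl a (a + 11 + j) = part gl a (a + 11).
Proof.
elim: j => [|j IH]; first by rewrite addn0.
rewrite addnS /= IH /inrg.
have -> : (a + 11 + j).+1 <= a + 11 = false by lia.
by rewrite andbF addn0.
Qed.

Variable pr : nat -> nat -> bool.
Hypothesis pr_anti : forall a a' b b', a <= a' -> b <= b' -> pr a' b' -> pr a b.
Hypothesis Hloc : forall b, b <= 16 -> loc9b gl b.
Hypothesis Hm : part gl 7 25 = 1.
Hypothesis Hp : pr (part gl 0 25) (part gl 14 25).

Lemma dfs_false k t : t + k = 25 ->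
  sdfs pr k t (rev (take t l)) (part gl 0 t) (part gl 7 t) (part gl 14 t) = false.
Proof.
elim: k t => [|k IH] t tk; first by [].
rewrite dfs_S.
have tl : t < size l by rewrite Hl; lia.
apply/negbTE/allPn; exists (gl t); first exact: mem_cands.
rewrite -rev_take_S //.
have Er : forall a, inrg (a + 5) (a + 11) t.+1 ->
   headr5 (rev (take t.+1 l)) = r5b gl (t.+1 - 5).
  move=> a /andP[h1 h2].
  have -> : t.+1 = (t.+1 - 5) + 5 by lia.
  by rewrite headr5_rt ?addnK //; lia.
have E0 : (if inrg 5 11 t.+1 then part gl 0 t + headr5 (rev (take t.+1 l)) else part gl 0 t)
          = part gl 0 t.+1.
  rewrite [part gl 0 t.+1]/=; case: ifP => h; last by rewrite addn0.
  by rewrite (Er 0).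
have E7 : (if inrg 12 18 t.+1 then part gl 7 t + headr5 (rev (take t.+1 l)) else part gl 7 t)
          = part gl 7 t.+1.
  rewrite [part gl 7 t.+1]/=; case: ifP => h; last by rewrite addn0.
  by rewrite (Er 7).
have E14 : (if inrg 19 25 t.+1 then part gl 14 t + headr5 (rev (take t.+1 l)) else part gl 14 t)
          = part gl 14 t.+1.
  rewrite [part gl 14 t.+1]/=; case: ifP => h; last by rewrite addn0.
  by rewrite (Er 14).
cbv zeta; rewrite E0 E7 E14.
have -> : [&& headloc (rev (take t.+1 l)), part gl 7 t.+1 <= 1,
          (t.+1 == 18) ==> (part gl 7 t.+1 == 1)
          & pr (part gl 0 t.+1) (part gl 14 t.+1)] = true.
  apply/and4P; split.
  - case: (ltnP t.+1 9) => h; first by rewrite headloc_short //; lia.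
    have -> : t.+1 = (t.+1 - 9) + 9 by lia.
    rewrite headloc_rt; last by lia.
    apply: Hloc; lia.
  - have h : t.+1 <= 25 by lia.
    by have := part_mono 7 h; rewrite Hm.
  - apply/implyP => /eqP ->.
    by have := part_const 7 7; rewrite Hm => <-.
  - apply: pr_anti Hp; apply: part_mono; lia.
rewrite (IH t.+1) //; lia.
Qed.

End Sound.



Lemma part_Wn (g : nat -> col) : part g 0 25 = Wn g 0 /\ part g 7 25 = Wn g 7 /\ part g 14 25 = Wn g 14.
Proof.
split; [|split]; rewrite /Wn !big_ord_recr big_ord0 /= -!plusE -!minusE /=; lia.
Qed.

Lemma dfs_contra (pr : nat -> nat -> bool) (g : nat -> col) :
  (forall x1 x2 y1 y2, x1 <= x2 -> y1 <= y2 -> pr x2 y2 -> pr x1 y1) ->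
  (forall b, b <= 16 -> loc9b g b) -> Wn g 7 = 1 -> pr (Wn g 0) (Wn g 14) ->
  sdfs pr 25 0 [::] 0 0 0 = false.
Proof.
move=> pra Hl Hm Hp.
set l := mkseq g 25.
have sl : size l = 25 by rewrite size_mkseq.
have eg : forall p, p < 25 -> nth d0 l p = g p by move=> p hp; rewrite nth_mkseq.
have eW : forall a, a <= 14 -> Wn (nth d0 l) a = Wn g a.
  move=> a ha; apply: eq_bigr => q _; rewrite /r5b !eg //; have := ltn_ord q; lia.
have [P0 [P7 P14]] := part_Wn (nth d0 l).
apply: (@dfs_false l sl pr pra _ _ _ 25 0 erefl).
- move=> b hb; rewrite /loc9b !eg; try lia; exact: Hl.
- by rewrite P7 eW.
- by rewrite P0 P14 !eW.
Qed.


Lemma cost5_sym a b c d e : cost5 a b c d e = cost5 e d c b a.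
Proof.
case: a b c d e => [a1 a2] [b1 b2] [c1 c2] [d1 d2] [e1 e2]; rewrite /cost5 /=.
by case: a2; case: b1; case: c1; case: c2; case: d1; case: e2.
Qed.
Lemma r5_sym a b c d e : r5 a b c d e = r5 e d c b a.
Proof. by rewrite /r5 /rv /ru (addnC b.1) (addnC a.2). Qed.
Lemma W9_sym a0 a1 a2 a3 y a5 a6 a7 a8 :
  W9 a0 a1 a2 a3 y a5 a6 a7 a8 = W9 a8 a7 a6 a5 y a3 a2 a1 a0.
Proof.
rewrite /W9 (cost5_sym a0 a1 a2 a3 y) (cost5_sym a1 a2 a3 y a5) (cost5_sym a2 a3 y a5 a6)
  (cost5_sym a3 y a5 a6 a7) (cost5_sym y a5 a6 a7 a8); lia.
Qed.
Lemma loc9_sym a0 a1 a2 a3 a4 a5 a6 a7 a8 :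
  loc9 a0 a1 a2 a3 a4 a5 a6 a7 a8 = loc9 a8 a7 a6 a5 a4 a3 a2 a1 a0.
Proof.
rewrite /loc9; apply: eq_all => x; rewrite /locx.
by rewrite (W9_sym a0) (W9_sym a0 a1 a2 a3 x).
Qed.

Lemma strip (g : nat -> col) :
  (forall b, b <= 16 -> loc9b g b) -> Wn g 7 = 1 ->
  (2 <= Wn g 0 /\ 3 <= Wn g 14) \/ (3 <= Wn g 0 /\ 2 <= Wn g 14).
Proof.
move=> Hl Hm.
pose g' p := g (24 - p).
have Hl' : forall b, b <= 16 -> loc9b g' b.
  move=> b hb; have := Hl (16 - b) (leq_subr _ _).
  rewrite /loc9b /g' loc9_sym.
  have -> : 16 - b + 8 = 24 - b by lia.
  have -> : 16 - b + 7 = 24 - (b+1) by lia.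
  have -> : 16 - b + 6 = 24 - (b+2) by lia.
  have -> : 16 - b + 5 = 24 - (b+3) by lia.
  have -> : 16 - b + 4 = 24 - (b+4) by lia.
  have -> : 16 - b + 3 = 24 - (b+5) by lia.
  have -> : 16 - b + 2 = 24 - (b+6) by lia.
  have -> : 16 - b + 1 = 24 - (b+7) by lia.
  by have -> : 16 - b = 24 - (b+8) by lia.
have Er : forall b, b <= 20 -> r5b g' b = r5b g (20 - b).
  move=> b hb; rewrite /r5b /g' r5_sym.
  have -> : 20 - b + 4 = 24 - b by lia.
  have -> : 20 - b + 3 = 24 - (b+1) by lia.
  have -> : 20 - b + 2 = 24 - (b+2) by lia.
  have -> : 20 - b + 1 = 24 - (b+3) by lia.
  by have -> : 20 - b = 24 - (b+4) by lia.
have EW : forall a, a <= 14 -> Wn g' a = \sum_(q < 7) r5b g (20 - (a + q)).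
  by move=> a ha; apply: eq_bigr => q _; rewrite Er //; have := ltn_ord q; lia.
have E0 : Wn g' 0 = Wn g 14.
  rewrite EW // /Wn !big_ord_recr !big_ord0 /= -!plusE -!minusE /=; lia.
have E7 : Wn g' 7 = Wn g 7.
  rewrite EW // /Wn !big_ord_recr !big_ord0 /= -!plusE -!minusE /=; lia.
have nA : forall h, (forall b, b <= 16 -> loc9b h b) -> Wn h 7 = 1 -> 2 <= Wn h 0.
  move=> h Hh Hmh; rewrite ltnNge; apply/negP => h1.
  have HA : forall x1 x2 y1 y2 : nat, x1 <= x2 -> y1 <= y2 -> prA x2 y2 -> prA x1 y1.
    by move=> x1 x2 y1 y2 xx _; rewrite /prA; apply: leq_trans.
  by have := @dfs_contra prA h HA Hh Hmh h1; rewrite dfsA.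
have a2 := nA g Hl Hm.
have b2 : 2 <= Wn g 14 by rewrite -E0; apply: nA => //; rewrite E7.
have nC : ~ (Wn g 0 = 2 /\ Wn g 14 = 2).
  case=> h1 h2.
  have := @dfs_contra prC g _ Hl Hm; rewrite dfsC /prC h1 h2.
  have H : forall x1 x2 y1 y2 : nat, x1 <= x2 -> y1 <= y2 ->
      (x2 <= 2) && (y2 <= 2) -> (x1 <= 2) && (y1 <= 2).
    move=> x1 x2 y1 y2 xx yy /andP[h3 h4]; apply/andP; split.
    - exact: leq_trans xx h3.
    - exact: leq_trans yy h4.
  by move=> /(_ H isT).
lia.
Qed.


Fixpoint allseq (k : nat) : seq (seq col) :=
  if k is k'.+1 then [seq x :: s | x <- cands, s <- allseq k'] else [:: [::]].

Lemma allseqP k l : size l = k -> l \in allseq k.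
Proof.
elim: k l => [|k IH] [|x l] // [sz].
change (x :: l \in [seq x :: s | x <- cands, s <- allseq k]).
by apply: (allpairs_f (fun x s => x :: s)); [exact: mem_cands | exact: IH].
Qed.

Definition cyc (k : nat) (l : seq col) (q : nat) : col := nth d0 l (q %% k).
Definition smallbad (k : nat) (l : seq col) : bool :=
  all (fun b => loc9b (cyc k l) b) (iota 0 k) &&
  (foldr (fun b acc => r5b (cyc k l) b + acc) 0 (iota 0 k) == 1).

Lemma small5 : all (fun l => ~~ smallbad 5 l) (allseq 5).
Proof. vm_compute. reflexivity. Qed.
Lemma small6 : all (fun l => ~~ smallbad 6 l) (allseq 6).
Proof. vm_compute. reflexivity. Qed.

Lemma sum_iota (F : nat -> nat) k : \sum_(q < k) F q = foldr (fun b acc => F b + acc) 0 (iota 0 k).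
Proof.
rewrite -(big_mkord xpredT) /index_iota subn0.
by elim: (iota 0 k) => [|x s IH]; rewrite ?big_nil ?big_cons ?IH.
Qed.

Lemma small_contra (k : nat) (T : nat -> col) (m : nat) :
  all (fun l => ~~ smallbad k l) (allseq k) -> 0 < k ->
  (forall a, T (a + k) = T a) ->
  (forall b, loc9b T b) ->
  \sum_(q < k) r5b T (m + q) <> 1.
Proof.
move=> hall k0 per Hl hs.
have perm : forall e, T (m + e) = T (m + e %% k).
  have perq : forall a q, T (a + q * k) = T a.
    move=> a; elim=> [|q IH]; first by rewrite mul0n addn0.
    by rewrite mulSn (addnC k) addnA per.
  by move=> e; rewrite {1}(divn_eq e k) addnCA addnC perq.
set l := mkseq (fun q => T (m + q)) k.
have E : forall e, cyc k l e = T (m + e).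
  by move=> e; rewrite /cyc nth_mkseq ?ltn_pmod // -perm.
have : l \in allseq k by apply: allseqP; rewrite size_mkseq.
move/(allP hall); rewrite /smallbad; apply/negP/negPn/andP; split.
- apply/allP => b _; rewrite /loc9b !E !addnA; exact: Hl.
- by rewrite -sum_iota -hs; apply/eqP; apply: eq_bigr => q _; rewrite /r5b !E !addnA.
Qed.


Section Graph.
Variable n : nat.
Hypothesis n5 : 5 <= n.
Lemma n0 : 0 < n. Proof. by apply: leq_trans n5. Qed.

Definition cl (j : nat) : 'I_n := Ordinal (ltn_pmod j n0).

Lemma cl_eq j k : (cl j == cl k) = (j == k %[mod n]).
Proof. by []. Qed.

Lemma cl_neq j d : 0 < d < n -> cl j != cl (j + d).
Proof.
move=> /andP[d0 dn]; rewrite cl_eq -{1}(addn0 j) eqn_modDl mod0n modn_small //.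
by rewrite eq_sym -lt0n.
Qed.

Lemma adjv j w : P2adj n (false, cl (j+1)) w =
  [|| w == (false, cl j), w == (false, cl (j+2)) | w == (true, cl (j+1))].
Proof.
case: w => [[] c]; rewrite /P2adj /gp_adj /=.
  by rewrite xpair_eqE /= -val_eqE /= eq_sym.
rewrite !xpair_eqE /= orbF orbC.
congr (_ || _).
- by rewrite eqn_modDr -val_eqE /= (modn_small (ltn_ord c)) eq_sym.
- by rewrite -val_eqE /= modnDml -addnA.
Qed.

Lemma adju j w : P2adj n (true, cl (j+2)) w =
  [|| w == (true, cl j), w == (true, cl (j+4)) | w == (false, cl (j+2))].
Proof.
case: w => [[] c]; rewrite /P2adj /gp_adj /=; last first.
  by rewrite xpair_eqE /= -val_eqE /= eq_sym.
rewrite !xpair_eqE /= orbF orbC.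
congr (_ || _).
- by rewrite eqn_modDr -val_eqE /= (modn_small (ltn_ord c)) eq_sym.
- by rewrite -val_eqE /= modnDml -addnA.
Qed.

Definition has (S : pvert n -> bool) (w : pvert n) : bool :=
  [exists w', P2adj n w w' && S w'].
Definition FS (S : pvert n -> bool) (w : pvert n) : nat :=
  if S w then 2 else if has S w then 0 else 1.
Definition Tc (S : pvert n -> bool) (j : nat) : col := (S (false, cl j), S (true, cl j)).

Lemma has3 (S : pvert n -> bool) w x1 x2 x3 :
  (forall w', P2adj n w w' = [|| w' == x1, w' == x2 | w' == x3]) ->
  has S w = [|| S x1, S x2 | S x3].
Proof.
move=> H; apply/existsP/idP => [[w' /andP[]]|].
  by rewrite H => /or3P[] /eqP -> ->; rewrite ?orbT.
by case/or3P => h; [exists x1|exists x2|exists x3]; rewrite H eqxx ?orbT h.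
Qed.

Lemma has_v S j : has S (false, cl (j+1)) =
  [|| S (false, cl j), S (false, cl (j+2)) | S (true, cl (j+1))].
Proof. by apply: has3 => w; rewrite adjv. Qed.

Lemma has_u S j : has S (true, cl (j+2)) =
  [|| S (true, cl j), S (true, cl (j+4)) | S (false, cl (j+2))].
Proof. by apply: has3 => w; rewrite adju. Qed.

Lemma colcost S j :
  FS S (false, cl (j+2)) + FS S (true, cl (j+2)) =
  cost5 (Tc S j) (Tc S (j+1)) (Tc S (j+2)) (Tc S (j+3)) (Tc S (j+4)).
Proof.
have E1 : j + 2 = (j + 1) + 1 by lia.
have E2 : j + 3 = (j + 1) + 2 by lia.
rewrite /FS has_u {1 2}E1 has_v -E1 -E2 /cost5 /Tc /pc /=.
by case: (S (false, cl (j+2))); case: (S (true, cl (j+2)));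
   case: (S (false, cl (j+1))); case: (S (false, cl (j+3)));
   case: (S (true, cl j)); case: (S (true, cl (j+4))).
Qed.

Lemma big_pvert (R : Type) (idx : R) (op : Monoid.com_law idx) (G : pvert n -> R) :
  \big[op/idx]_(w : pvert n) G w = \big[op/idx]_(a : 'I_n) op (G (false, a)) (G (true, a)).
Proof.
have -> : \big[op/idx]_(w : pvert n) G w =
    \big[op/idx]_(p : bool * 'I_n | xpredT p.1 && xpredT p.2) G (p.1, p.2).
  by apply: eq_bigr => -[b a].
rewrite -(pair_big xpredT xpredT (fun b a => G (b, a))) /= big_bool /=.
rewrite -big_split /=; apply: eq_bigr => a _; exact: Monoid.mulmC.
Qed.

Lemma cl_inj_lt m k k' : k < n -> k' < n -> cl (m + k) = cl (m + k') -> k = k'.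
Proof.
move=> kn kn' /eqP; rewrite cl_eq eqn_modDl !modn_small //; exact/eqP.
Qed.

Definition C5 (m : nat) : {set 'I_n} := [set cl (m + 2 + val k) | k : 'I_5].

Lemma sum_C5 m (h : 'I_n -> nat) :
  \sum_(a in C5 m) h a = \sum_(k < 5) h (cl (m + 2 + k)).
Proof.
rewrite big_imset //= => k k' _ _ /cl_inj_lt E; apply: val_inj; apply: E.
- by apply: leq_trans (ltn_ord k) n5.
- by apply: leq_trans (ltn_ord k') n5.
Qed.

Lemma splitC m (h : 'I_n -> nat) :
  \sum_a h a = \sum_(k < 5) h (cl (m + 2 + k)) + \sum_a (if a \in C5 m then 0 else h a).
Proof.
rewrite -sum_C5 [\sum_(a in C5 m) _]big_mkcond /= -big_split /=; apply: eq_bigr => a _.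
by case: ifP => _; rewrite ?addn0 ?add0n.
Qed.

Lemma sum5 m (h1 h2 : 'I_n -> nat) :
  (forall a, a \notin C5 m -> h1 a = h2 a) ->
  \sum_a h1 a + \sum_(k < 5) h2 (cl (m + 2 + k)) =
  \sum_a h2 a + \sum_(k < 5) h1 (cl (m + 2 + k)).
Proof.
move=> H; rewrite (splitC m h1) (splitC m h2).
have -> : \sum_a (if a \in C5 m then 0 else h1 a) = \sum_a (if a \in C5 m then 0 else h2 a).
  by apply: eq_bigr => a _; case: ifP => // /negbT /H.
lia.
Qed.

Definition CC (S : pvert n -> bool) (a : 'I_n) : nat := FS S (false, a) + FS S (true, a).
Definition PC (S : pvert n -> bool) (a : 'I_n) : nat := S (false, a) + S (true, a).
Definition wt (S : pvert n -> bool) : nat := \sum_(w : pvert n) FS S w.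

Lemma wtE S : wt S = \sum_a CC S a.
Proof. by rewrite /wt big_pvert. Qed.

Lemma cntE S : #|[set w | S w]| = \sum_a PC S a.
Proof.
rewrite -sum1_card big_mkcond /= big_pvert; apply: eq_bigr => a _.
by rewrite !inE /PC; case: (S (false, a)); case: (S (true, a)).
Qed.

Lemma cl_repr (a : 'I_n) : cl (val a + n - 2 + 2) = a.
Proof.
apply: val_inj => /=; rewrite subnK; last by apply: leq_trans (leq_addl _ _); lia.
by rewrite modnDr modn_small.
Qed.

Lemma CC_cl S j : CC S (cl (j + 2)) =
  cost5 (Tc S j) (Tc S (j+1)) (Tc S (j+2)) (Tc S (j+3)) (Tc S (j+4)).
Proof. exact: colcost. Qed.

Lemma sumCC S m : \sum_(k < 5) CC S (cl (m + 2 + k)) =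
  W9 (Tc S m) (Tc S (m+1)) (Tc S (m+2)) (Tc S (m+3)) (Tc S (m+4))
     (Tc S (m+5)) (Tc S (m+6)) (Tc S (m+7)) (Tc S (m+8)).
Proof.
have e : forall k, m + 2 + k = (m + k) + 2 by move=> k; lia.
rewrite !big_ord_recr big_ord0 /= !e !CC_cl /W9 add0n.
rewrite !addn0 -!addnA.
done.
Qed.

Definition upd (S : pvert n -> bool) (k : nat) (x : col) : pvert n -> bool :=
  fun w => if w.2 == cl k then (if w.1 then x.2 else x.1) else S w.

Lemma Tc_upd S k x j : Tc (upd S k x) j = if cl j == cl k then x else Tc S j.
Proof. by rewrite /Tc /upd /=; case: ifP => // _; case: x. Qed.

Lemma PC_upd S k x a : PC (upd S k x) a = if a == cl k then pc x else PC S a.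
Proof. by rewrite /PC /upd /=; case: ifP. Qed.

Lemma cl_off m e : e <= 8 -> (cl (m + e) == cl (m + 4)) = (e == 4).
Proof.
move=> e8; case: (ltngtP e 4) => h.
- apply/negbTE; have := @cl_neq (m + e) (4 - e).
  rewrite (_ : m + e + (4 - e) = m + 4); last by lia.
  by apply; apply/andP; split; lia.
- apply/negbTE; rewrite eq_sym; have := @cl_neq (m + 4) (e - 4).
  rewrite (_ : m + 4 + (e - 4) = m + e); last by lia.
  by apply; apply/andP; split; lia.
- by rewrite h eqxx.
Qed.

Lemma shift_in m a' e : e <= 4 -> cl (a' + e) = cl (m + 4) -> cl (a' + 2) \in C5 m.
Proof.
move=> e4 /eqP; rewrite cl_eq => H.
have lt : 4 - e < 5 by lia.
apply/imsetP; exists (Ordinal lt) => //; apply/eqP; rewrite cl_eq /=.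
rewrite -(eqn_modDr e).
rewrite (_ : a' + 2 + e = (a' + e) + 2); last by lia.
rewrite (_ : m + 2 + (4 - e) + e = (m + 4) + 2); last by lia.
by rewrite eqn_modDr.
Qed.

Lemma FS_RDF S : is_RDF n (FS S).
Proof.
move=> w; rewrite /FS; split; first by case: (S w) => //; case: (has S w).
case: (S w) => //; case H: (has S w) => // _.
case/existsP: H => w' /andP[aw Sw]; exists w'; split => //.
by rewrite /FS Sw.
Qed.

Lemma weight_FS S : weight n (FS S) = wt S.
Proof. by []. Qed.

Lemma Vset_FS S : Vset n (FS S) 2 = [set w | S w].
Proof. by apply/setP => w; rewrite !inE /FS; case: (S w) => //; case: (has S w). Qed.

Section F.
Variable f : pvert n -> nat.
Hypothesis hf : is_min_RDF_minV2 n f.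
Let S := fun w => f w == 2.

Lemma normal w : f w = FS S w.
Proof.
case: hf => [[RDF minw] _].
rewrite /FS /S; case E: (f w == 2); first by move/eqP: E.
have [le2 z0] := RDF w.
case H: (has _ w); last first.
  case E0: (f w == 0).
    move/eqP: E0 => /z0 [w' [aw fw']].
    by move: H; rewrite /has => /existsP; case; exists w'; rewrite aw /= fw'.
  by move: le2 E E0; case: (f w) => [|[|[|]]].
case E1: (f w == 1); last by move: le2 E E1; case: (f w) => [|[|[|]]].
exfalso.
pose g z := if z == w then 0 else f z.
have Rg : is_RDF n g.
  move=> z; rewrite /g; case: ifP => [/eqP -> | zw]; split => //.
  - case/existsP: H => w' /andP[aw fw']; exists w'; split => //.
    case: ifP => [/eqP ew|]; last by move/eqP: fw'.
    by move: fw' E1; rewrite ew => /eqP ->.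
  - by case: (RDF z).
  - move=> /(proj2 (RDF z)) [w' [aw fw']]; exists w'; split => //.
    case: ifP => [/eqP ew|//]; by move: E1; rewrite -ew fw'.
have := minw g Rg.
rewrite /weight (bigD1 w) //= [X in _ <= X](bigD1 w) //=.
rewrite [g w]/g eqxx add0n (eqP E1).
have -> : \sum_(i | i != w) g i = \sum_(i | i != w) f i.
  by apply: eq_bigr => i /negbTE iw; rewrite /g iw.
by rewrite add1n ltnn.
Qed.

Lemma local m : loc9 (Tc S m) (Tc S (m+1)) (Tc S (m+2)) (Tc S (m+3)) (Tc S (m+4))
     (Tc S (m+5)) (Tc S (m+6)) (Tc S (m+7)) (Tc S (m+8)).
Proof.
case: hf => [[RDF minw] minv].
apply/allP => x _.
set S' := upd S (m+4) x.
have wf : weight n f = wt S by apply: eq_bigr => w _; rewrite normal.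
have Hout : forall a, a \notin C5 m -> CC S' a = CC S a.
  move=> a aC; rewrite -(cl_repr a) !CC_cl !Tc_upd.
  have ne : forall e, e <= 4 -> (cl (val a + n - 2 + e) == cl (m + 4)) = false.
    move=> e e4; apply/negbTE/negP => /eqP E; move: aC.
    by rewrite -(cl_repr a) (shift_in e4 E).
  have := ne 0 isT; rewrite addn0 => ->.
  by rewrite (ne 1) // (ne 2) // (ne 3) // (ne 4).
have W := sum5 Hout.
rewrite !sumCC !Tc_upd in W.
have c0 : (cl m == cl (m + 4)) = false by rewrite -{1}(addn0 m) cl_off.
rewrite c0 !cl_off // /= in W.
have Hout2 : forall a, a \notin C5 m -> PC S' a = PC S a.
  move=> a aC; rewrite PC_upd; case: ifP => // /eqP E; exfalso.
  move/negP: aC; apply; rewrite E; apply/imsetP; exists (@Ordinal 5 2 isT) => //=.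
  by rewrite -addnA.
have P := sum5 Hout2.
rewrite !big_ord_recr !big_ord0 /= !PC_upd in P.
have cle : forall k, k < 5 -> (cl (m + 2 + k) == cl (m + 4)) = (k == 2).
  move=> k k5; rewrite (_ : m + 2 + k = m + (k + 2)); last by lia.
  by rewrite cl_off; [apply/eqP/eqP => h; lia | lia].
rewrite !cle // /= in P.
have PCc : PC S (cl (m + 2 + 2)) = pc (Tc S (m+4)).
  by rewrite /PC /pc /Tc; have -> : m + 2 + 2 = m + 4 by lia.
rewrite PCc in P.
rewrite -!cntE in P.
have wl := minw _ (FS_RDF S'); rewrite weight_FS wf in wl.
rewrite /locx.
set Wc := W9 _ _ _ _ (Tc S (m+4)) _ _ _ _ in W *.
set Wx := W9 _ _ _ _ x _ _ _ _ in W *.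
have W2 : wt S' + Wc = wt S + Wx by rewrite !wtE; exact: W.
case: (ltngtP Wc Wx) => //= hW.
- exfalso; move: wl; lia.
- have eqw : weight n f = weight n (FS S') by rewrite weight_FS wf; lia.
  have gam : is_gammaR_RDF n (FS S').
    split; first exact: FS_RDF.
    by move=> h Rh; rewrite -eqw; apply: minw.
  have := minv _ gam; rewrite Vset_FS (_ : Vset n f 2 = [set w | S w]) //.
  lia.
Qed.
End F.
End Graph.


Section R.
Variable n : nat.
Hypothesis n5 : 5 <= n.
Variable f : pvert n -> nat.
Hypothesis hf : is_min_RDF_minV2 n f.
Let S := fun w => f w == 2.

Lemma card_nbrs w x1 x2 x3 :
  (forall w', P2adj n w w' = [|| w' == x1, w' == x2 | w' == x3]) -> uniq [:: x1; x2; x3] ->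
  #|[set w' | P2adj n w w' && (w' \in Vset n f 2)]| = S x1 + S x2 + S x3.
Proof.
move=> H u.
have -> : #|[set w' | P2adj n w w' && (w' \in Vset n f 2)]| = #|filter S [:: x1; x2; x3]|.
  apply: eq_card => z; rewrite !inE H mem_filter /S !inE.
  by rewrite andbC.
rewrite (card_uniqP _); last by rewrite filter_uniq.
rewrite size_filter /= addn0 addnA.
done.
Qed.

Local Open Scope ring_scope.

Lemma r_gen w x1 x2 x3 :
  (forall w', P2adj n w w' = [|| w' == x1, w' == x2 | w' == x3]) -> uniq [:: x1; x2; x3] ->
  r_f n f w = (if S w then 0%N else let k := (S x1 + S x2 + S x3)%N in
               if k == 0%N then 1%N else k.-1)%:R / 2.
Proof.
move=> H u.
have hs := has3 S H.
have fw := normal hf w.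
rewrite /r_f /g_f.
have Sw : S w = (f w == 2%N) by [].
rewrite Sw; case E: (f w == 2%N); first by rewrite subrr mul0r.
move: fw; rewrite /FS /= E hs (card_nbrs H u).
have Sx : forall x, S x = (f x == 2%N) by [].
rewrite !Sx.
case: (f x1 == 2%N); case: (f x2 == 2%N); case: (f x3 == 2%N) => /= -> /=.
all: by rewrite ?mulrDl ?addrK.
Qed.

Let T := Tc n5 S.

Lemma rcol j : r_f n f (false, cl n5 (j+2)%N) + r_f n f (true, cl n5 (j+2)%N) =
  (r5 (T j) (T (j+1)%N) (T (j+2)%N) (T (j+3)%N) (T (j+4)%N))%:R / 2.
Proof.
have Ev : (j + 2 = (j + 1) + 1)%N by lia.
have Ev3 : (j + 3 = (j + 1) + 2)%N by lia.
have neq : forall a d, (0 < d < n)%N -> cl n5 a != cl n5 (a + d) by move=> a d; apply: cl_neq.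
rewrite {1}Ev (r_gen (adjv n5 (j+1))); last first.
  rewrite /= !inE !xpair_eqE /= orbF andbT.
  by apply: neq; apply/andP; split; lia.
rewrite (r_gen (adju n5 j)); last first.
  rewrite /= !inE !xpair_eqE /= orbF andbT.
  by apply: neq; apply/andP; split; lia.
rewrite -mulrDl -natrD -Ev -Ev3 /r5 /rv /ru /T /Tc /=.
by [].
Qed.


Lemma vp_cond (j : int) (m : nat) (hj : modz j (Posz n) = modz (Posz (m + 2)) (Posz n))
  (c : 'I_n) (k : nat) :
  ((Posz (nat_of_ord c)) == j + (Posz k) %[mod (n : int)])%Z = (c == cl n5 (m + 2 + k)%N).
Proof.
rewrite -val_eqE /= modz_nat (modn_small (ltn_ord c)) -modzDml hj modzDml -PoszD modz_nat.
by rewrite eqz_nat.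
Qed.

Definition CS (m t : nat) : {set 'I_n} := [set cl n5 (m + 2 + val k)%N | k : 'I_t].

Lemma sum_cols (m t : nat) (F : pvert n -> rat) : (t <= n)%N ->
  \sum_(w in [set w : pvert n | w.2 \in CS m t]) F w =
  \sum_(k < t) (F (false, cl n5 (m + 2 + k)%N) + F (true, cl n5 (m + 2 + k)%N)).
Proof.
move=> tn.
rewrite big_mkcond /= big_pvert.
have -> : \sum_(a < n) ((if (false, a) \in [set w : pvert n | w.2 \in CS m t] then F (false, a) else 0)
   + (if (true, a) \in [set w : pvert n | w.2 \in CS m t] then F (true, a) else 0))
   = \sum_(a < n | a \in CS m t) (F (false, a) + F (true, a)).
  rewrite [RHS]big_mkcond /=; apply: eq_bigr => a _; rewrite !inE /=.
  by case: (a \in CS m t); rewrite ?addr0.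
rewrite big_imset //= => k k' _ _ /cl_inj_lt E; apply: val_inj; apply: E.
- by apply: leq_trans (ltn_ord k) tn.
- by apply: leq_trans (ltn_ord k') tn.
Qed.

Lemma cols_r5 (m t : nat) :
  \sum_(k < t) (r_f n f (false, cl n5 (m + 2 + k)%N) + r_f n f (true, cl n5 (m + 2 + k)%N)) =
  (\sum_(k < t) r5b T (m + k)%N)%:R / 2.
Proof.
rewrite natr_sum mulr_suml; apply: eq_bigr => k _.
rewrite (_ : (m + 2 + k = (m + k) + 2)%N); last by lia.
by rewrite rcol /r5b -!addnA.
Qed.

Lemma CS_T m : CS m n = setT.
Proof.
apply/eqP; rewrite eqEcard subsetT cardsT card_imset ?card_ord ?leqnn //.
move=> k k' /cl_inj_lt E; apply: val_inj; apply: E; exact: ltn_ord.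
Qed.

Lemma window_big (j : int) (m : nat) (hj : modz j (Posz n) = modz (Posz (m + 2)) (Posz n)) :
  (7 <= n)%N -> r_fS n f (Vp n j 7) = (\sum_(k < 7) r5b T (m + k)%N)%:R / 2.
Proof.
move=> n7; rewrite -cols_r5 -sum_cols // /r_fS.
apply: eq_bigl => w; rewrite !inE; apply/existsP/imsetP => [[k]|[k _ ->]].
  by rewrite (vp_cond hj) => /eqP ->; exists k.
by exists k; rewrite (vp_cond hj) eqxx.
Qed.

Lemma window_small (j : int) (m : nat) (hj : modz j (Posz n) = modz (Posz (m + 2)) (Posz n)) :
  (n <= 7)%N -> r_fS n f (Vp n j 7) = (\sum_(k < n) r5b T (m + k)%N)%:R / 2.
Proof.
move=> n7; rewrite -cols_r5 -sum_cols // /r_fS CS_T.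
apply: eq_bigl => w; rewrite !inE; apply/existsP.
have : w.2 \in CS m n by rewrite CS_T inE.
case/imsetP => k _ E.
have k7 : (k < 7)%N by apply: leq_trans (ltn_ord k) n7.
by exists (Ordinal k7); rewrite (vp_cond hj) E.
Qed.
End R.

Unset Implicit Arguments. Set Strict Implicit. Set Printing Implicit Defensive.
Local Open Scope ring_scope.

Theorem lemma2p9 (n : nat) (hn : (5 <= n)%N) (f : pvert n -> nat)
  (hf : is_min_RDF_minV2 n f) (i : int) :
  r_fS n f (Vp n i 7) = 1 / 2 ->
  (1 <= r_fS n f (Vp n (i - 7) 7) /\ 3 / 2 <= r_fS n f (Vp n (i + 7) 7)) \/
  (3 / 2 <= r_fS n f (Vp n (i - 7) 7) /\ 1 <= r_fS n f (Vp n (i + 7) 7)).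
Proof.
move=> H.
set T := Tc hn (fun w => f w == 2%N).
set B := absz (modz (i - 9) (Posz n)).
have n0 : (Posz n != 0) by rewrite eqz_nat; apply/eqP; lia.
have EB : Posz B = modz (i - 9) (Posz n) by rewrite /B gez0_abs // modz_ge0.
have hw : forall (c : int) (a : nat), c = i - 9 + Posz a ->
    modz c (Posz n) = modz (Posz (B + a)%N) (Posz n).
  by move=> c a ->; rewrite PoszD EB modzDml.
have hmid := hw i (7 + 2)%N ltac:(lia).
have hleft := hw (i - 7) (0 + 2)%N ltac:(lia).
have hright := hw (i + 7) (14 + 2)%N ltac:(lia).
rewrite !addnA in hmid hleft hright.
have Hloc : forall m, loc9b T m.
  by move=> m; exact: (local hn hf m).
case: (leqP 7 n) => n7.
- rewrite (window_big hn hf hmid n7) in H.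
  rewrite (window_big hn hf hleft n7) (window_big hn hf hright n7).
  pose g p := T (B + p)%N.
  have EW : forall a, (\sum_(k < 7) r5b T (B + a + k)%N)%N = Wn g a.
    move=> a; apply: eq_bigr => k _; rewrite /r5b /g !addnA //.
  rewrite !EW in H *.
  have Hm : Wn g 7 = 1%N.
    apply/eqP; rewrite -(eqr_nat rat); apply/eqP; lra.
  have Hl : forall b, (b <= 16)%N -> loc9b g b.
    move=> b _; have := Hloc (B + b)%N; rewrite /loc9b /g !addnA //.
  have := strip Hl Hm.

  case=> [[h1 h2]|[h1 h2]]; move: h1 h2; rewrite -!(ler_nat rat) => h1 h2;
    [left|right]; split; lra.
- exfalso.
  rewrite (window_small hn hf hmid (ltnW n7)) in H.
  have Hs : (\sum_(k < n) r5b T (B + 7 + k)%N)%N = 1%N.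
    apply/eqP; rewrite -(eqr_nat rat); apply/eqP; lra.
  have hall : all (fun l => ~~ smallbad n l) (allseq n).
    have : (n = 5 \/ n = 6)%N by lia.
    by case=> ->; [exact: small5 | exact: small6].
  apply: (small_contra hall _ _ Hloc Hs); first by lia.
  move=> a; have E : cl hn (a + n) = cl hn a by apply: val_inj; rewrite /= modnDr.
  by rewrite /T /Tc E.
Qed.
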